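(* Let $(\Delta X)_X$ be a quasi-regular family and let $A$ be a $\Delta$-regular algebra with structure map $\beta:\mathrm{FT}\,A\to A$. Extend $\beta$ to $\Delta A$ by $$\beta(t)=\bigvee\{\beta(s)\;:\; s\ll t\}\qquad (t\in\Delta A)$$ (these suprema exist because the sets involved are $\Delta$-sets; on finite terms this agrees with the original $\beta$). Then $(A,\beta)$ with $\beta:\Delta A\to A$ is an Eilenberg–Moore algebra for the monad $(\Delta,\mu,\eta)$; that is, $\beta(\eta_A(a))=a$ for all $a\in A$, and $\beta\circ\mu_A=\beta\circ\Delta\beta$ as maps $\Delta(\Delta A)\to A$; equivalently, for every $t(s_i\mid i\in I)\in\Delta(\Delta A)$ with $s_i\in \Delta A$, $\beta(t(s_i\mid i\in I))=\beta(t(\beta(s_i)\mid i\in I))$, where on the left the term of terms is flattened into a term over $A$.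
   Context: Fix a ranked alphabet $\Sigma$. An ordered $\Sigma$-algebra is a $\Sigma$-algebra $A$ with a partial order $\le$ having a least element $\bot^A$ such that every operation is monotone. $\mathrm{FT}\,X$ denotes the finite partial $\Sigma$-terms over a set $X$ (finite trees with internal nodes labeled by symbols of $\Sigma$ of matching arity, leaves labeled by constants or elements of $X$, and possibly missing subterms, written $\bot$), and $\mathrm{CT}\,X$ the partial $\Sigma$-coterms (finite or infinite such trees), ordered by extension of partial trees; $\mathrm{CT}\,X$ is the free $\omega$-continuous algebra on $X$ (countable directed sups exist and operations preserve them; morphisms are strict monotone operation-preserving maps preserving countable directed sups). A quasi-regular family is a family $(\Delta X)_X$, indexed by all sets, with each $\Delta X$ an ordered $\Sigma$-subalgebra of $\mathrm{CT}\,X$ containing $X$, such that every morphism $h:\mathrm{CT}\,X\to\mathrm{CT}\,Y$ of $\omega$-continuous algebras with $h(X)\subseteq\Delta Y$ satisfies $h(\Delta X)\subseteq \Delta Y$. Then $\Delta$ is a monad on sets (a submonad of the coterm monad): $\eta_X:X\to\Delta X$ sends $x$ to the one-node term $x$; for $g:X\to Y$, $\Delta g:\Delta X\to\Delta Y$ relabels leaves by $g$; $\mu_X:\Delta(\Delta X)\to\Delta X$ substitutes, at each leaf, the term labeling it and flattens. For an ordered algebra $A$, its structure map $\beta:\mathrm{FT}\,A\to A$ evaluates finite partial terms over $A$ in $A$ (leaf $a\mapsto a$, $\bot\mapsto\bot^A$). For $t_1,t_2\in\mathrm{CT}\,X$, write $t_1\ll t_2$ if $t_1\in\mathrm{FT}\,X$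 and $t_1$ is obtained from $t_2$ by deleting subterms (i.e. agrees with $t_2$ as a labeled tree wherever $t_1$ is defined). A subset $B\subseteq A$ is a $\Delta$-set if $B=\{\beta(s):s\ll t\}$ for some $t\in\Delta A$ (such a set is countable and directed). $A$ is a $\Delta$-regular algebra if every $\Delta$-set in $A$ has a supremum and the operations preserve suprema of $\Delta$-sets, i.e. for $f\in\Sigma_n$ and $\Delta$-sets $B_1,\dots,B_n$, $f^A(\bigvee B_1,\dots,\bigvee B_n)=\bigvee\{f^A(b_1,\dots,b_n): b_i\in B_i\}$. *)

(* Defs.v *)
From Stdlib Require Import List Arith.
Import ListNotations.
Set Implicit Arguments.

(* Partial Sigma-(co)terms over X, represented as partial labelings of
   positions (paths of child indices from the root).  [None] = undefined
   (bottom / missing subterm). *)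
Definition term (Sym X : Type) := list nat -> option (Sym + X).

Definition arity {Sym X : Type} (ar : Sym -> nat) (l : Sym + X) : nat :=
  match l with inl f => ar f | inr _ => 0 end.

Definition isCT {Sym X : Type} (ar : Sym -> nat) (t : term Sym X) : Prop :=
  forall p i, t (p ++ [i]) <> None ->
    exists l, t p = Some l /\ i < arity ar l.

Definition tle {Sym X : Type} (t u : term Sym X) : Prop :=
  forall p l, t p = Some l -> u p = Some l.

Definition bounded {Sym X : Type} (n : nat) (t : term Sym X) : Prop :=
  forall p, n <= length p -> t p = None.

Definition isFT {Sym X : Type} (ar : Sym -> nat) (t : term Sym X) : Prop :=
  isCT ar t /\ exists n, bounded n t.

Definition tll {Sym X : Type} (ar : Sym -> nat) (s t : term Sym X) : Prop :=
  isFT ar s /\ tle s t.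

Definition tbot {Sym X : Type} : term Sym X := fun _ => None.

Definition teta {Sym X : Type} (x : X) : term Sym X :=
  fun p => match p with [] => Some (inr x) | _ => None end.

Definition top {Sym X : Type} (ar : Sym -> nat) (f : Sym)
  (ts : nat -> term Sym X) : term Sym X :=
  fun p => match p with
           | [] => Some (inl f)
           | i :: q => if i <? ar f then ts i q else None
           end.

Fixpoint subst {Sym X Y : Type} (t : term Sym Y) (g : Y -> term Sym X)
  (p : list nat) {struct p} : option (Sym + X) :=
  match t [] with
  | Some (inr y) => g y p
  | Some (inl f) =>
      match p with
      | [] => Some (inl f)
      | i :: p' => subst (fun q => t (i :: q)) g p'
      end
  | None => None
  end.

Definition directed {T : Type} (le : T -> T -> Prop) (u : nat -> T) : Prop :=
  forall i j, exists k, le (u i) (u k) /\ le (u j) (u k).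

Definition is_lub {T : Type} (le : T -> T -> Prop) (P : T -> Prop) (s : T) : Prop :=
  (forall x, P x -> le x s) /\ (forall b, (forall x, P x -> le x b) -> le s b).

Definition ct_lub {Sym X : Type} (ar : Sym -> nat) (u : nat -> term Sym X)
  (s : term Sym X) : Prop :=
  (forall n, tle (u n) s) /\
  (forall b, isCT ar b -> (forall n, tle (u n) b) -> tle s b).

Definition omega_morph {Sym X Y : Type} (ar : Sym -> nat)
  (h : term Sym X -> term Sym Y) : Prop :=
  (forall t, isCT ar t -> isCT ar (h t)) /\
  h tbot = tbot /\
  (forall t u, isCT ar t -> isCT ar u -> tle t u -> tle (h t) (h u)) /\
  (forall f ts, (forall i, i < ar f -> isCT ar (ts i)) ->
     h (top ar f ts) = top ar f (fun i => h (ts i))) /\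
  (forall (u : nat -> term Sym X) s,
     (forall n, isCT ar (u n)) -> directed tle u -> isCT ar s ->
     ct_lub ar u s -> ct_lub ar (fun n => h (u n)) (h s)).

Definition quasi_regular {Sym : Type} (ar : Sym -> nat)
  (Delta : forall X : Type, term Sym X -> Prop) : Prop :=
  (forall X : Type,
     (forall t, Delta X t -> isCT ar t) /\
     (forall x : X, Delta X (teta x)) /\
     Delta X tbot /\
     (forall f ts, (forall i, i < ar f -> Delta X (ts i)) ->
        Delta X (top ar f ts))) /\
  (forall (X Y : Type) (h : term Sym X -> term Sym Y),
     omega_morph ar h -> (forall x : X, Delta Y (h (teta x))) ->
     forall t, Delta X t -> Delta Y (h t)).

(* ordered Sigma-algebra; operations take argument families nat -> A, of
   which only the indices < ar f are relevant *)
Definition ordered_alg {Sym A : Type} (ar : Sym -> nat) (le : A -> A -> Prop)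
  (bot : A) (op : Sym -> (nat -> A) -> A) : Prop :=
  (forall a, le a a) /\
  (forall a b, le a b -> le b a -> a = b) /\
  (forall a b c, le a b -> le b c -> le a c) /\
  (forall a, le bot a) /\
  (forall f a b, (forall i, i < ar f -> a i = b i) -> op f a = op f b) /\
  (forall f a b, (forall i, i < ar f -> le (a i) (b i)) -> le (op f a) (op f b)).

Fixpoint evalN {Sym A : Type} (bot : A) (op : Sym -> (nat -> A) -> A)
  (n : nat) (t : term Sym A) : A :=
  match n with
  | 0 => bot
  | S n' =>
      match t [] with
      | None => bot
      | Some (inr a) => a
      | Some (inl f) => op f (fun i => evalN bot op n' (fun q => t (i :: q)))
      end
  end.

(* the Delta-set {beta(s) : s << t} *)
Definition DS {Sym A : Type} (ar : Sym -> nat) (bot : A)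
  (op : Sym -> (nat -> A) -> A) (t : term Sym A) : A -> Prop :=
  fun a => exists s n, tll ar s t /\ bounded n s /\ evalN bot op n s = a.

Definition delta_regular {Sym : Type} (ar : Sym -> nat)
  (Delta : forall X : Type, term Sym X -> Prop) {A : Type}
  (le : A -> A -> Prop) (bot : A) (op : Sym -> (nat -> A) -> A) : Prop :=
  ordered_alg ar le bot op /\
  (forall t, Delta A t -> exists c, is_lub le (DS ar bot op t) c) /\
  (forall f (ts : nat -> term Sym A) (cs : nat -> A),
     (forall i, i < ar f -> Delta A (ts i) /\ is_lub le (DS ar bot op (ts i)) (cs i)) ->
     is_lub le
       (fun a => exists b, (forall i, i < ar f -> DS ar bot op (ts i) (b i)) /\ a = op f b)
       (op f cs)).

(* Main.v *)
Require Import Defs.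
From Stdlib Require Import List Arith Lia FunctionalExtensionality ClassicalEpsilon.
Import ListNotations.
Set Implicit Arguments.

Lemma choice_fun {X Y : Type} (R : X -> Y -> Prop) :
  (forall a, exists b, R a b) -> exists f, forall a, R a (f a).
Proof.
  intros H. exists (fun a => proj1_sig (constructive_indefinite_description _ (H a))).
  intros a. exact (proj2_sig (constructive_indefinite_description _ (H a))).
Qed.

Lemma subst_none {Sym X Y : Type} (t : term Sym Y) (g : Y -> term Sym X) p :
  t [] = None -> subst t g p = None.
Proof. intros H; destruct p; simpl; rewrite H; auto. Qed.

Lemma subst_leaf {Sym X Y : Type} (t : term Sym Y) (g : Y -> term Sym X) p y :
  t [] = Some (inr y) -> subst t g p = g y p.
Proof. intros H; destruct p; simpl; rewrite H; auto. Qed.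

Lemma subst_node_nil {Sym X Y : Type} (t : term Sym Y) (g : Y -> term Sym X) f :
  t [] = Some (inl f) -> subst t g [] = Some (inl f).
Proof. intros H; simpl; rewrite H; auto. Qed.

Lemma subst_node_cons {Sym X Y : Type} (t : term Sym Y) (g : Y -> term Sym X) f i p :
  t [] = Some (inl f) -> subst t g (i :: p) = subst (fun q => t (i :: q)) g p.
Proof. intros H; simpl; rewrite H; auto. Qed.

Lemma isCT_sub {Sym X : Type} (ar : Sym -> nat) (t : term Sym X) i :
  isCT ar t -> isCT ar (fun q => t (i :: q)).
Proof. intros H p j Hp. exact (H (i :: p) j Hp). Qed.

Lemma subst_isCT {Sym X Y : Type} (ar : Sym -> nat) (g : Y -> term Sym X) :
  (forall y, isCT ar (g y)) -> forall t, isCT ar t -> isCT ar (subst t g).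
Proof.
  intros Hg t Ht p. revert t Ht. induction p as [|j p IH]; intros t Ht i H.
  - simpl app in H. destruct (t []) as [[f|y]|] eqn:E.
    + simpl in H. rewrite E in H.
      destruct (t [i]) eqn:E2.
      * destruct (Ht [] i) as [l [Hl Hi]]. simpl; rewrite E2; discriminate.
        rewrite E in Hl; injection Hl; intros <-.
        exists (inl f); split; auto. apply subst_node_nil; auto.
      * congruence.
    + rewrite (subst_leaf _ _ _ E) in H; rewrite (subst_leaf _ _ _ E). apply (Hg y [] i H).
    + exfalso; apply H; apply subst_none; auto.
  - destruct (t []) as [[f|y]|] eqn:E.
    + simpl app in H. rewrite (subst_node_cons _ _ _ _ E) in H; rewrite (subst_node_cons _ _ _ _ E).
      apply IH; auto. apply isCT_sub; auto.
    + rewrite (subst_leaf _ _ _ E) in H; rewrite (subst_leaf _ _ _ E). apply (Hg y _ i H).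
    + exfalso; apply H; apply subst_none; auto.
Qed.

Lemma subst_mono {Sym X Y : Type} (g : Y -> term Sym X) (t u : term Sym Y) :
  tle t u -> tle (subst t g) (subst u g).
Proof.
  intros Htu p. revert t u Htu. induction p as [|i p IH]; intros t u Htu l H.
  - destruct (t []) as [[f|y]|] eqn:E.
    + pose proof (Htu [] _ E) as E'. rewrite (subst_node_nil _ _ E) in H.
      rewrite (subst_node_nil _ _ E'); auto.
    + pose proof (Htu [] _ E) as E'. rewrite (subst_leaf _ _ _ E) in H.
      rewrite (subst_leaf _ _ _ E'); auto.
    + rewrite subst_none in H; auto; discriminate.
  - destruct (t []) as [[f|y]|] eqn:E.
    + pose proof (Htu [] _ E) as E'. rewrite (subst_node_cons _ _ _ _ E) in H.
      rewrite (subst_node_cons _ _ _ _ E'). eapply IH; [|exact H].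
      intros q l' Hq; apply Htu; exact Hq.
    + pose proof (Htu [] _ E) as E'. rewrite (subst_leaf _ _ _ E) in H.
      rewrite (subst_leaf _ _ _ E'); auto.
    + rewrite subst_none in H; auto; discriminate.
Qed.

Lemma subst_top {Sym X Y : Type} (ar : Sym -> nat) (g : Y -> term Sym X) f ts :
  subst (top ar f ts) g = top ar f (fun i => subst (ts i) g).
Proof.
  apply functional_extensionality; intros [|i q].
  - reflexivity.
  - rewrite (subst_node_cons (top ar f ts) g i q (f:=f) eq_refl).
    unfold top at 2. destruct (i <? ar f) eqn:E.
    + f_equal. apply functional_extensionality; intros r. unfold top; rewrite E; auto.
    + apply subst_none. unfold top; rewrite E; auto.
Qed.

Lemma subst_attain {Sym X Y : Type} (g : Y -> term Sym X) p :
  forall (s : term Sym Y) (u : nat -> term Sym Y) l,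
  directed tle u -> (forall q l, s q = Some l -> exists n, u n q = Some l) ->
  subst s g p = Some l -> exists n, subst (u n) g p = Some l.
Proof.
  induction p as [|i p IH]; intros s u l Hd Hat H.
  - destruct (s []) as [[f|y]|] eqn:E.
    + destruct (Hat [] _ E) as [n Hn]. exists n.
      rewrite (subst_node_nil _ _ E) in H. rewrite (subst_node_nil _ _ Hn); auto.
    + destruct (Hat [] _ E) as [n Hn]. exists n.
      rewrite (subst_leaf _ _ _ E) in H. rewrite (subst_leaf _ _ _ Hn); auto.
    + rewrite subst_none in H; auto; discriminate.
  - destruct (s []) as [[f|y]|] eqn:E.
    + rewrite (subst_node_cons _ _ _ _ E) in H.
      assert (Hd' : directed tle (fun n q => u n (i :: q))).
      { intros j k; destruct (Hd j k) as [m [H1 H2]]; exists m; split;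
          intros q l' H'; [apply H1|apply H2]; exact H'. }
      assert (Hat' : forall q l, s (i :: q) = Some l -> exists n, u n (i :: q) = Some l).
      { intros q l' H'; apply Hat in H'; auto. }
      destruct (IH (fun q => s (i :: q)) (fun n q => u n (i :: q)) l Hd' Hat' H) as [n1 Hn1].
      destruct (Hat [] _ E) as [n0 Hn0].
      destruct (Hd n0 n1) as [m [H1 H2]]. exists m.
      rewrite (subst_node_cons _ _ _ _ (H1 _ _ Hn0)).
      eapply subst_mono; [|exact Hn1]. intros q l' H'; apply H2; exact H'.
    + destruct (Hat [] _ E) as [n Hn]. exists n.
      rewrite (subst_leaf _ _ _ E) in H. rewrite (subst_leaf _ _ _ Hn); auto.
    + rewrite subst_none in H; auto; discriminate.
Qed.

Lemma lub_attain {Sym X : Type} (ar : Sym -> nat) (u : nat -> term Sym X) s :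
  (forall n, isCT ar (u n)) -> directed tle u -> ct_lub ar u s ->
  forall q l, s q = Some l -> exists n, u n q = Some l.
Proof.
  intros Hct Hd [Hub Hl].
  assert (Hc : forall p, exists v : option (Sym + X),
    (v = None /\ forall n, u n p = None) \/ (exists n, v = u n p /\ u n p <> None)).
  { intros p. destruct (classic (exists n, u n p <> None)) as [[n Hn]|Hn].
    - exists (u n p); right; eauto.
    - exists None; left; split; auto. intros n. destruct (u n p) eqn:E; auto.
      exfalso; apply Hn; exists n; rewrite E; discriminate. }
  destruct (choice_fun _ Hc) as [b0 Hb0].
  assert (H2 : forall m p l, u m p = Some l -> b0 p = Some l).
  { intros m p l H. destruct (Hb0 p) as [[_ Hn]|[n [Hv Hn]]].
    - rewrite Hn in H; discriminate.
    - destruct (u n p) as [l'|] eqn:E; [|congruence].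
      destruct (Hd m n) as [k [K1 K2]].
      pose proof (K1 _ _ H). pose proof (K2 _ _ E). congruence. }
  assert (Hb : tle s b0).
  { apply Hl.
    - intros p i Hp. destruct (Hb0 (p ++ [i])) as [[Hv _]|[n [Hv Hn]]]; [congruence|].
      destruct (Hct n p i Hn) as [l [Hl1 Hl2]]. exists l; split; auto.
      eapply H2; eauto.
    - intros n p l H; eapply H2; eauto. }
  intros q l Hq. apply Hb in Hq. destruct (Hb0 q) as [[Hv _]|[n [Hv Hn]]]; [congruence|].
  exists n; congruence.
Qed.

Lemma subst_morph {Sym X Y : Type} (ar : Sym -> nat) (g : Y -> term Sym X) :
  (forall y, isCT ar (g y)) -> omega_morph ar (fun t => subst t g).
Proof.
  intros Hg. split; [|split; [|split; [|split]]].
  - apply subst_isCT; auto.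
  - apply functional_extensionality; intros p; apply subst_none; auto.
  - intros t u _ _; apply subst_mono.
  - intros f ts _; apply subst_top.
  - intros u s Hct Hd Hs Hlub. split.
    + intros n; apply subst_mono; apply (proj1 Hlub).
    + intros b Hb Hub p l H.
      destruct (@subst_attain _ _ _ g p s u l Hd (lub_attain Hct Hd Hlub) H) as [n Hn].
      apply (Hub n); exact Hn.
Qed.

Lemma subst_teta {Sym X Y : Type} (g : Y -> term Sym X) (y : Y) :
  subst (@teta Sym Y y) g = g y.
Proof. apply functional_extensionality; intros [|i p]; reflexivity. Qed.

Lemma evalN_none {Sym A : Type} (bot : A) op n (t : term Sym A) :
  t [] = None -> evalN bot op n t = bot.
Proof. intros H; destruct n; simpl; auto; rewrite H; auto. Qed.

Lemma bounded_sub {Sym X : Type} m (s : term Sym X) i :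
  bounded (S m) s -> bounded m (fun q => s (i :: q)).
Proof. intros H p Hp; apply H; simpl; lia. Qed.

Lemma bounded_mono {Sym X : Type} m M (s : term Sym X) :
  bounded m s -> m <= M -> bounded M s.
Proof. intros H HM p Hp; apply H; lia. Qed.

Lemma evalN_fuel {Sym A : Type} (bot : A) op m :
  forall M (s : term Sym A), bounded m s -> m <= M -> evalN bot op M s = evalN bot op m s.
Proof.
  induction m as [|m IH]; intros M s Hb HM.
  - simpl. apply evalN_none. apply Hb; simpl; lia.
  - destruct M as [|M]; [lia|]. simpl. destruct (s []) as [[f|y]|]; auto.
    f_equal. apply functional_extensionality; intros i.
    apply IH; [apply bounded_sub; auto| lia].
Qed.

Lemma DS_tbot {Sym A : Type} (ar : Sym -> nat) le (bot : A) op :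
  ordered_alg ar le bot op -> is_lub le (DS ar bot op (@tbot Sym A)) bot.
Proof.
  intros [Hrefl [_ [_ [Hbot _]]]]. split.
  - intros a [s [n [[_ Hle] [_ Hev]]]]. subst a.
    rewrite evalN_none; auto.
    destruct (s []) eqn:E; auto. apply Hle in E; discriminate.
  - intros b _; apply Hbot.
Qed.

Lemma teta_isCT {Sym X : Type} (ar : Sym -> nat) (x : X) : isCT ar (@teta Sym X x).
Proof. intros p i H. destruct p; simpl in H; congruence. Qed.

Lemma DS_teta {Sym A : Type} (ar : Sym -> nat) le (bot : A) op a :
  ordered_alg ar le bot op -> is_lub le (DS ar bot op (@teta Sym A a)) a.
Proof.
  intros [Hrefl [_ [_ [Hbot _]]]]. split.
  - intros b [s [n [[_ Hle] [_ Hev]]]]. subst b.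
    destruct n as [|n]; simpl; auto.
    destruct (s []) eqn:E; auto. apply Hle in E. simpl in E.
    injection E; intros <-; auto.
  - intros b Hb. apply Hb. exists (teta a), 1. split; [split|split].
    + split; [apply teta_isCT|]. exists 1. intros p Hp; destruct p; simpl in *; auto; lia.
    + intros p l H; auto.
    + intros p Hp; destruct p; simpl in *; auto; lia.
    + reflexivity.
Qed.

Lemma fin_bound (k : nat) (m : nat -> nat) : exists M, forall i, i < k -> m i <= M.
Proof.
  induction k as [|k [M HM]].
  - exists 0; intros; lia.
  - exists (Nat.max M (m k)). intros i Hi.
    destruct (Nat.eq_dec i k); [subst; lia|]. specialize (HM i ltac:(lia)); lia.
Qed.

Lemma DS_top {Sym A : Type} (ar : Sym -> nat) Delta le (bot : A) op f ts cs :
  delta_regular ar Delta le bot op ->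
  (forall i, i < ar f -> Delta A (ts i) /\ is_lub le (DS ar bot op (ts i)) (cs i)) ->
  is_lub le (DS ar bot op (top ar f ts)) (op f cs).
Proof.
  intros [[Hrefl [Hanti [Htrans [Hbot [Hcong Hmono]]]]] [_ Hsup]] Hts.
  destruct (Hsup f ts cs Hts) as [Hup Hleast]. split.
  - intros a [s [m [[[Hct _] Hle] [Hb Hev]]]]. subst a.
    destruct m as [|m]; simpl; auto.
    destruct (s []) as [l|] eqn:E; auto.
    pose proof (Hle _ _ E) as E'. simpl in E'. injection E'; intros <-.
    apply Hup. exists (fun i => evalN bot op m (fun q => s (i :: q))). split; auto.
    intros i Hi. exists (fun q => s (i :: q)), m. split; [split|split]; auto.
    + split; [apply isCT_sub; auto|]. exists m; apply bounded_sub; auto.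
    + intros p l H. pose proof (Hle _ _ H) as H'. simpl in H'.
      apply Nat.ltb_lt in Hi. rewrite Hi in H'. auto.
    + apply bounded_sub; auto.
  - intros b Hb. apply Hleast. intros a [bb [Hbb ->]].
    assert (Hc : forall i, exists rm : term Sym A * nat,
      i < ar f -> tll ar (fst rm) (ts i) /\ bounded (snd rm) (fst rm) /\
                  evalN bot op (snd rm) (fst rm) = bb i).
    { intros i. destruct (Nat.lt_ge_cases i (ar f)) as [Hi|Hi].
      - destruct (Hbb i Hi) as [r [m Hr]]. exists (r, m); auto.
      - exists (tbot, 0); intros; lia. }
    destruct (choice_fun _ Hc) as [rm Hrm].
    destruct (fin_bound (ar f) (fun i => snd (rm i))) as [M HM].
    apply Hb. exists (top ar f (fun i => fst (rm i))), (S M).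
    split; [split; [split|]|split].
    + intros p j H. destruct p as [|i q].
      * simpl in H. destruct (j <? ar f) eqn:E; [|congruence].
        exists (inl f); split; auto. simpl. apply Nat.ltb_lt; auto.
      * simpl in H. destruct (i <? ar f) eqn:E; [|congruence].
        apply Nat.ltb_lt in E. destruct (Hrm i E) as [[[Hct _] _] _].
        destruct (Hct q j H) as [l [Hl1 Hl2]]. exists l; split; auto.
        simpl. apply Nat.ltb_lt in E. rewrite E; auto.
    + exists (S M). intros p Hp. destruct p as [|i q]; simpl in Hp; [lia|].
      simpl. destruct (i <? ar f) eqn:E; auto.
      apply Nat.ltb_lt in E. destruct (Hrm i E) as [_ [Hbd _]].
      apply Hbd. specialize (HM i E). simpl in HM. lia.
    + intros p l H. destruct p as [|i q]; auto.
      simpl in H |- *. destruct (i <? ar f) eqn:E; [|congruence].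
      apply Nat.ltb_lt in E. destruct (Hrm i E) as [[_ Hle] _]. auto.
    + intros p Hp. destruct p as [|i q]; simpl in Hp; [lia|].
      simpl. destruct (i <? ar f) eqn:E; auto.
      apply Nat.ltb_lt in E. destruct (Hrm i E) as [_ [Hbd _]].
      apply Hbd. specialize (HM i E). simpl in HM. lia.
    + simpl. apply Hcong. intros i Hi.
      destruct (Hrm i Hi) as [_ [Hbd Hev]].
      assert (Hfun : (fun q => if i <? ar f then fst (rm i) q else None) = fst (rm i)).
      { apply functional_extensionality; intros q.
        apply Nat.ltb_lt in Hi; rewrite Hi; auto. }
      rewrite Hfun. rewrite <- Hev. apply evalN_fuel; auto.
Qed.

Fixpoint evalX {Sym X A : Type} (bot : A) (op : Sym -> (nat -> A) -> A)
  (c : X -> A) (n : nat) (T0 : term Sym X) : A :=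
  match n with
  | 0 => bot
  | S n' =>
      match T0 [] with
      | None => bot
      | Some (inr x) => c x
      | Some (inl f) => op f (fun i => evalX bot op c n' (fun q => T0 (i :: q)))
      end
  end.

Lemma subst_finite {Sym X A : Type} (ar : Sym -> nat) Delta le (bot : A) op
  (g : X -> term Sym A) (c : X -> A) :
  quasi_regular ar Delta -> delta_regular ar Delta le bot op ->
  (forall x, Delta A (g x) /\ is_lub le (DS ar bot op (g x)) (c x)) ->
  forall n T0, isCT ar T0 -> bounded n T0 ->
  Delta A (subst T0 g) /\ is_lub le (DS ar bot op (subst T0 g)) (evalX bot op c n T0).
Proof.
  intros HQ HR Hg.
  destruct HQ as [HQ1 _]. destruct (HQ1 A) as [_ [_ [Hbot Htop]]].
  assert (Hnone : forall T0 : term Sym X, T0 [] = None -> subst T0 g = tbot).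
  { intros T0 E; apply functional_extensionality; intros p; apply subst_none; auto. }
  induction n as [|n IH]; intros T0 Hct Hb.
  - rewrite Hnone by (apply Hb; simpl; lia). split; auto.
    apply DS_tbot. apply (proj1 HR).
  - simpl. destruct (T0 []) as [[f|y]|] eqn:E.
    + assert (Heq : subst T0 g = top ar f (fun i => subst (fun q => T0 (i :: q)) g)).
      { apply functional_extensionality; intros [|i q].
        - apply subst_node_nil; auto.
        - rewrite (subst_node_cons _ _ _ _ E). simpl.
          destruct (i <? ar f) eqn:Ei; auto. apply subst_none.
          destruct (T0 [i]) eqn:E2; auto.
          destruct (Hct [] i) as [l [Hl Hi]]; [simpl; congruence|].
          rewrite E in Hl; injection Hl; intros <-. simpl in Hi.
          apply Nat.ltb_lt in Hi; congruence. }
      rewrite Heq.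
      assert (Hch : forall i, Delta A (subst (fun q => T0 (i :: q)) g) /\
         is_lub le (DS ar bot op (subst (fun q => T0 (i :: q)) g))
           (evalX bot op c n (fun q => T0 (i :: q)))).
      { intros i; apply IH; [apply isCT_sub; auto| apply bounded_sub; auto]. }
      split.
      * apply Htop; intros i _; apply Hch.
      * eapply DS_top; eauto.
    + assert (Heq : subst T0 g = g y).
      { apply functional_extensionality; intros p; apply subst_leaf; auto. }
      rewrite Heq; apply Hg.
    + rewrite Hnone by auto. split; auto. apply DS_tbot. apply (proj1 HR).
Qed.

Definition cut {Sym X : Type} (m : nat) (T0 : term Sym X) : term Sym X :=
  fun p => if length p <? m then T0 p else None.

Lemma subst_cut {Sym X Y : Type} (g : Y -> term Sym X) p :
  forall m (T0 : term Sym Y), length p < m -> subst (cut m T0) g p = subst T0 g p.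
Proof.
  induction p as [|i p IH]; intros m T0 Hm.
  - assert (E : cut m T0 [] = T0 []).
    { unfold cut; simpl. destruct m; [simpl in Hm; lia|]; reflexivity. }
    simpl. rewrite E. auto.
  - assert (E : cut m T0 [] = T0 []).
    { unfold cut; simpl. destruct m; [simpl in Hm; lia|]; reflexivity. }
    simpl. rewrite E. destruct (T0 []) as [[f|y]|]; auto.
    assert (Hf : (fun q => cut m T0 (i :: q)) = cut (m - 1) (fun q => T0 (i :: q))).
    { apply functional_extensionality; intros q; unfold cut; simpl.
      destruct (S (length q) <? m) eqn:E1; destruct (length q <? m - 1) eqn:E2; auto.
      - apply Nat.ltb_lt in E1; apply Nat.ltb_nlt in E2; lia.
      - apply Nat.ltb_nlt in E1; apply Nat.ltb_lt in E2; lia. }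
    rewrite Hf. apply IH. simpl in Hm; lia.
Qed.

Lemma cut_isCT {Sym X : Type} (ar : Sym -> nat) m (T0 : term Sym X) :
  isCT ar T0 -> isCT ar (cut m T0).
Proof.
  intros H p i Hp. unfold cut in *.
  destruct (length (p ++ [i]) <? m) eqn:E; [|congruence].
  destruct (H p i Hp) as [l [Hl Hi]]. exists l; split; auto.
  rewrite length_app in E. simpl in E.
  apply Nat.ltb_lt in E. assert (length p <? m = true) by (apply Nat.ltb_lt; lia).
  rewrite H0; auto.
Qed.

Lemma cut_bounded {Sym X : Type} m (T0 : term Sym X) : bounded m (cut m T0).
Proof.
  intros p Hp; unfold cut. destruct (length p <? m) eqn:E; auto.
  apply Nat.ltb_lt in E; lia.
Qed.

Lemma cut_tle {Sym X : Type} m (T0 : term Sym X) : tle (cut m T0) T0.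
Proof. intros p l; unfold cut; destruct (length p <? m); congruence. Qed.

Lemma DS_mono {Sym A : Type} (ar : Sym -> nat) (bot : A) op (t u : term Sym A) a :
  tle t u -> DS ar bot op t a -> DS ar bot op u a.
Proof.
  intros Htu [s [n [[Hs Hle] [Hb Hev]]]]. exists s, n; split; [split|split]; auto.
  intros p l H; apply Htu; apply Hle; auto.
Qed.

Lemma one_dir {Sym X A : Type} (ar : Sym -> nat) Delta le (bot : A) op
  (beta : term Sym A -> A) (g g' : X -> term Sym A) (c : X -> A) (T : term Sym X) :
  quasi_regular ar Delta -> delta_regular ar Delta le bot op ->
  (forall t, Delta A t -> is_lub le (DS ar bot op t) (beta t)) ->
  (forall x, Delta A (g x) /\ is_lub le (DS ar bot op (g x)) (c x)) ->
  (forall x, Delta A (g' x) /\ is_lub le (DS ar bot op (g' x)) (c x)) ->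
  Delta X T ->
  le (beta (subst T g)) (beta (subst T g')).
Proof.
  intros HQ HR Hbeta Hg Hg' HT.
  pose proof HR as [[_ [_ [Htrans _]]] _].
  pose proof HQ as [HQ1 HQ2].
  assert (HDelta : forall h : X -> term Sym A, (forall x, Delta A (h x)) -> Delta A (subst T h)).
  { intros h Hh. apply (HQ2 X A (fun t => subst t h)).
    - apply subst_morph. intros x. apply (proj1 (HQ1 A)). auto.
    - intros x; rewrite subst_teta; auto.
    - auto. }
  assert (HTct : isCT ar T) by (apply (proj1 (HQ1 X)); auto).
  pose proof (Hbeta _ (HDelta g (fun x => proj1 (Hg x)))) as [_ Hl].
  pose proof (Hbeta _ (HDelta g' (fun x => proj1 (Hg' x)))) as [Hu' _].
  apply Hl. intros a [s [m [[Hs Hle] [Hb Hev]]]].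
  destruct (@subst_finite Sym X A ar Delta le bot op g c HQ HR Hg m (cut m T) (@cut_isCT Sym X ar m T HTct) (@cut_bounded Sym X m T)) as [_ [Hup1 _]].
  destruct (@subst_finite Sym X A ar Delta le bot op g' c HQ HR Hg' m (cut m T) (@cut_isCT Sym X ar m T HTct) (@cut_bounded Sym X m T)) as [_ [_ Hl2]].
  apply Htrans with (evalX bot op c m (cut m T)).
  - apply Hup1. exists s, m; split; [split|split]; auto.
    intros p l H. pose proof (Hle _ _ H) as H'.
    rewrite subst_cut; auto.
    destruct (Nat.lt_ge_cases (length p) m) as [Hp|Hp]; auto.
    rewrite (Hb p Hp) in H; discriminate.
  - apply Hl2. intros a' Ha'. apply Hu'. eapply DS_mono; [|exact Ha'].
    apply subst_mono. apply cut_tle.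
Qed.

Theorem mainTheorem2 (Sym : Type) (ar : Sym -> nat)
  (Delta : forall X : Type, term Sym X -> Prop)
  (A : Type) (le : A -> A -> Prop) (bot : A) (op : Sym -> (nat -> A) -> A)
  (beta : term Sym A -> A) :
  quasi_regular ar Delta ->
  delta_regular ar Delta le bot op ->
  (forall t, Delta A t -> is_lub le (DS ar bot op t) (beta t)) ->
  (forall a : A, beta (teta a) = a) /\
  (forall T : term Sym {t : term Sym A | Delta A t},
     Delta _ T ->
     beta (subst T (fun s => proj1_sig s)) =
     beta (subst T (fun s => teta (beta (proj1_sig s))))).
Proof.
  intros HQ HR Hbeta.
  pose proof HR as [[Hrefl [Hanti [Htrans [Hbot _]]]] _].
  pose proof HQ as [HQ1 _]. destruct (HQ1 A) as [_ [Heta _]].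
  assert (Huniq : forall P x y, is_lub le P x -> is_lub le P y -> x = y).
  { intros P x y [Hx1 Hx2] [Hy1 Hy2]. apply Hanti; [apply Hx2|apply Hy2]; auto. }
  assert (Hteta : forall a : A, beta (teta a) = a).
  { intros a. eapply Huniq; [apply Hbeta; auto|apply DS_teta; apply (proj1 HR)]. }
  split; auto.
  intros T HT.
  set (c := fun s : {t : term Sym A | Delta A t} => beta (proj1_sig s)).
  assert (Hg : forall x, Delta A (proj1_sig x) /\ is_lub le (DS ar bot op (proj1_sig x)) (c x)).
  { intros [t Ht]; simpl; split; auto. }
  assert (Hg' : forall x, Delta A (teta (c x)) /\ is_lub le (DS ar bot op (teta (c x))) (c x)).
  { intros x; split; auto. apply DS_teta; apply (proj1 HR). }
  apply Hanti.
  - eapply one_dir; eauto.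
  - eapply one_dir; eauto.
Qed.
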